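(* Let $\lambda=0$ and let $y_1,y_2\in\mathbb{R}^k$. For $i\in\{1,2\}$ with $\mathbb{P}(r(y_1,y_2)=i)>0$ let $y_i^*\in\operatorname*{argmax}_{y\in\mathcal{Y}}\mathbb{E}[g(y)\mid r(y_1,y_2)=i]$ (and if $\mathbb{P}(r(y_1,y_2)=i)=0$ let $y_i^*\in\mathcal{Y}$ be arbitrary). Then $$\mathrm{EUBO}(y_1^*,y_2^* )\;\ge\;W_0(y_1,y_2).$$
   Context: Let $\mathcal{Y}\subseteq\mathbb{R}^k$ be compact. Let $g$ be a random function on $\mathbb{R}^k$ distributed as a Gaussian process with continuous mean and covariance; all probabilities and expectations are with respect to the law of $g$. For a query $(y_1,y_2)\in\mathbb{R}^k\times\mathbb{R}^k$ the noiseless ($\lambda=0$) response is $r(y_1,y_2)=1$ if $g(y_1)>g(y_2)$ and $r(y_1,y_2)=2$ if $g(y_1)<g(y_2)$ (ties broken arbitrarily). $\mathrm{EUBO}(y_1,y_2)=\mathbb{E}[\max\{g(y_1),g(y_2)\}]$, and $$W_0(y_1,y_2)=\sum_{i\in\{1,2\}:\,\mathbb{P}(r(y_1,y_2)=i)>0}\mathbb{P}(r(y_1,y_2)=i)\max_{y\in\mathcal{Y}}\mathbb{E}[g(y)\mid r(y_1,y_2)=i],$$ where these maxima are assumed attained. *)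

(* Defs.v *)
From HB Require Import structures.
From mathcomp Require Import all_boot all_order all_algebra.
From mathcomp Require Import all_classical all_reals all_analysis.
Set Implicit Arguments. Unset Strict Implicit. Unset Printing Implicit Defensive.
Import Order.TTheory GRing.Theory Num.Theory.
Import numFieldNormedType.Exports.
Local Open Scope classical_set_scope.
Local Open Scope ring_scope.

Section defs.
Context {R : realType} {d : measure_display} {T : measurableType d}.
Variable P : probability T R.

Definition Expect (X : T -> R) : R := fine (\int[P]_w (X w)%:E)%E.

Definition Econd (X : T -> R) (A : set T) : R :=
  fine (\int[P]_(w in A) (X w)%:E)%E / fine (P A).

Definition has_normal_law (X : T -> R) (m v : R) : Prop :=
  forall B : set R, measurable B ->
    P (X @^-1` B) = if v == 0 then \d_m B else normal_prob m (Num.sqrt v) B.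

(** g is a Gaussian process on R^k with mean function mu and covariance K:
    each g y is a random variable, and every finite linear combination
    sum_j c_j g(x_j) is normally distributed with mean sum_j c_j mu(x_j) and
    variance sum_{j,l} c_j c_l K(x_j, x_l). *)
Definition gaussian_process (k : nat) (g : 'rV[R]_k -> T -> R)
    (mu : 'rV[R]_k -> R) (K : 'rV[R]_k -> 'rV[R]_k -> R) : Prop :=
  (forall y, measurable_fun setT (g y)) /\
  (forall s : seq (R * 'rV[R]_k),
     0 <= \sum_(p <- s) \sum_(q <- s) p.1 * q.1 * K p.2 q.2) /\
  forall s : seq (R * 'rV[R]_k),
    has_normal_law (fun w => \sum_(p <- s) p.1 * g p.2 w)
      (\sum_(p <- s) p.1 * mu p.2)
      (\sum_(p <- s) \sum_(q <- s) p.1 * q.1 * K p.2 q.2).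

(** noiseless response r(y1,y2) in {1,2}, ties broken arbitrarily (measurably) *)
Definition noiseless_response (k : nat) (g : 'rV[R]_k -> T -> R)
    (y1 y2 : 'rV[R]_k) (r : T -> nat) : Prop :=
  (forall w, r w = 1%N \/ r w = 2%N) /\
  (forall w, g y2 w < g y1 w -> r w = 1%N) /\
  (forall w, g y1 w < g y2 w -> r w = 2%N) /\
  (forall i : nat, measurable [set w | r w = i]).

Definition EUBO (k : nat) (g : 'rV[R]_k -> T -> R) (y1 y2 : 'rV[R]_k) : R :=
  Expect (fun w => Num.max (g y1 w) (g y2 w)).

(** W_0(y1,y2) = sum_{i in {1,2}, P(r=i)>0} P(r=i) max_{y in Y} E[g(y) | r = i]
    (the maximum, assumed attained, is written as a supremum) *)
Definition W0 (k : nat) (Y : set 'rV[R]_k) (g : 'rV[R]_k -> T -> R)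
    (r : T -> nat) : R :=
  \sum_(i <- [:: 1%N; 2%N] | (0 < P [set w | r w = i])%E)
     fine (P [set w | r w = i]) *
     sup [set Econd (g y) [set w | r w = i] | y in Y].

End defs.

(* Main.v *)
Require Import Defs.
From HB Require Import structures.
From mathcomp Require Import all_boot all_order all_algebra.
From mathcomp Require Import all_classical all_reals all_analysis.
From mathcomp Require Import measurable_realfun.
From mathcomp Require Import ring lra.
Import Order.TTheory GRing.Theory Num.Theory.
Import numFieldNormedType.Exports.
Local Open Scope classical_set_scope.
Local Open Scope ring_scope.
Section S.
Context {R : realType}.

Lemma pt_bound (m s x : R) : s != 0 ->
  `|x - m| * normal_fun m s x <= `|s| * normal_fun m (s * Num.sqrt 2) x.
Proof.
move=> s0.
rewrite /normal_fun.
set u := (x - m) ^+ 2.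
have s2 : 0 < s ^+ 2 by rewrite exprn_even_gt0.
have e1 : s ^+ 2 *+ 2 = 2 * s ^+ 2 by rewrite mulr_natl.
have e2 : (s * Num.sqrt 2) ^+ 2 *+ 2 = 4 * s ^+ 2.
  by rewrite exprMn sqr_sqrtr ?ler0n // mulrnAr -mulr_natl; lra.
rewrite e1 e2.
set t := u / (4 * s ^+ 2).
have -> : - u / (2 * s ^+ 2) = - t - t.
  rewrite /t; field. all: try lra.
rewrite expRD.
have -> : - u / (4 * s ^+ 2) = - t by rewrite /t mulNr.
rewrite mulrA ler_pM2r ?expR_gt0 //.
have ht : `|x - m| <= `|s| * (1 + t).
  have sa : 0 < `|s| by rewrite normr_gt0.
  have : t = (`|x - m| / `|s|) ^+ 2 / 4.
    rewrite /t /u expr_div_n -!normrX !ger0_norm ?sqr_ge0 //; by field.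
  move=> ->.
  set q := `|x - m| / `|s|.
  have -> : `|x - m| = `|s| * q by rewrite /q mulrCA divff ?mulr1 // gt_eqF.
  rewrite ler_pM2l //; have := sqr_ge0 (q - 2); rewrite expr2 [q ^+ 2]expr2; nra.
rewrite -ler_pdivlMr ?expR_gt0 // expRN invrK.
apply: (le_trans ht); rewrite ler_pM2l ?normr_gt0 //.
exact: expR_ge1Dx.
Qed.

Lemma integrable_abs_pdf (m s : R) : s != 0 ->
  (@lebesgue_measure R).-integrable setT (fun x => (`|x| * normal_pdf m s x)%:E).
Proof.
move=> s0.
have s'0 : s * Num.sqrt 2 != 0 by rewrite mulf_neq0 // sqrtr_eq0 -ltNge ltr0n.
set c1 := normal_peak s * `|s| / normal_peak (s * Num.sqrt 2).
have i1 := integrableZl measurableT c1 (integrable_normal_pdf m (s * Num.sqrt 2)).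
have i2 := integrableZl measurableT `|m| (integrable_normal_pdf m s).
have i3 := integrableD measurableT i1 i2.
apply: (le_integrable measurableT _ _ i3).
  apply/measurable_EFinP; apply: measurable_funM; last exact: measurable_normal_pdf.
  exact: normr_measurable.
move=> x _.
have p0 := normal_pdf_ge0 m s x.
have p'0 := normal_pdf_ge0 m (s * Num.sqrt 2) x.
have pk : 0 < normal_peak s := normal_peak_gt0 s0.
have pk' : 0 < normal_peak (s * Num.sqrt 2) := normal_peak_gt0 s'0.
have c10 : 0 <= c1 by rewrite /c1 divr_ge0 ?mulr_ge0 // ltW.
rewrite -!EFinM -EFinD !abse_EFin lee_fin.
rewrite ger0_norm ?mulr_ge0 // ger0_norm ?addr_ge0 ?mulr_ge0 //.
have hx : `|x| <= `|x - m| + `|m|.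
  by rewrite -[X in `|X|](subrK m) ler_normD.
apply: (le_trans (ler_wpM2r p0 hx)); rewrite mulrDl lerD2r.
rewrite /normal_pdf (negbTE s0) (negbTE s'0) /=.
have := @pt_bound m s x s0.
rewrite /c1 => hb.
rewrite mulrCA (mulrC (normal_peak s)) mulrA.
  rewrite divfK ?gt_eqF //; nra.
  exact: ltW.
by rewrite invr_ge0 ltW.
Qed.

Lemma normal_abs_lty (m s : R) : s != 0 ->
  (\int[normal_prob m s]_x (`|x|%:E) < +oo)%E.
Proof.
move=> s0.
have numu := @normal_prob_dominates R m s.
set RN := Radon_Nikodym_SigmaFinite.f (normal_prob m s) (@lebesgue_measure R).
have mRN : measurable_fun setT RN.
  apply: measurable_int.
  exact: (Radon_Nikodym_SigmaFinite.f_integrable numu).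
rewrite -(Radon_Nikodym_SigmaFinite.change_of_variables numu (f := fun x => `|x|%:E)) //; last first.
  by apply: measurableT_comp.
have ae : ae_eq (@lebesgue_measure R) setT RN (fun x => (normal_pdf m s x)%:E).
  apply: integral_ae_eq => //.
  - exact: (Radon_Nikodym_SigmaFinite.f_integrable numu).
  - by apply: measurableT_comp => //; exact: measurable_normal_pdf.
  - by move=> E _ mE; rewrite -(Radon_Nikodym_SigmaFinite.f_integral numu mE).
rewrite (_ : (\int[lebesgue_measure]_x (`|x|%:E * RN x))%E =
   (\int[lebesgue_measure]_x ((`|x| * normal_pdf m s x)%:E))%E); last first.
  apply: ae_eq_integral => //.
  apply: emeasurable_funM => //; by apply: measurableT_comp.
  apply/measurable_EFinP; apply: measurable_funM; last exact: measurable_normal_pdf.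
  exact: normr_measurable.
  move: ae; apply: filterS => x /= H /H ->; by rewrite EFinM.
exact: (integrable_lty measurableT (integrable_abs_pdf m s s0)).
Qed.

Lemma normal_law_integrable d (T : measurableType d) (P : probability T R)
  (X : T -> R) (m v : R) : measurable_fun setT X -> 0 <= v ->
  has_normal_law P X m v -> P.-integrable setT (EFin \o X).
Proof.
move=> mX v0 hl.
apply/integrableP; split; first exact/measurable_EFinP.
pose XL : T -> measurableTypeR R := X.
have mXL : measurable_fun setT XL by [].
have -> : (\int[P]_x `|(EFin \o X) x| = \int[pushforward P XL]_y (`|y|%:E))%E.
  rewrite (ge0_integral_pushforward mXL) //=.
  by apply: measurableT_comp.
have [v00|vn0] := eqVneq v 0.
  rewrite (eq_measure_integral (@dirac _ (measurableTypeR R) m R)) //; last first.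
    by move=> A mA _; transitivity (P (X @^-1` A)) => //; rewrite hl // v00 eqxx.
  rewrite integral_dirac //= ?diracT ?mul1e ?ltry //.
  by apply: measurableT_comp.
rewrite (eq_measure_integral (normal_prob m (Num.sqrt v))) //; last first.
  by move=> A mA _; transitivity (P (X @^-1` A)) => //; rewrite hl // (negbTE vn0).
apply: normal_abs_lty.
by rewrite sqrtr_eq0 -ltNge lt_neqAle eq_sym vn0 v0.
Qed.
End S.

Theorem mainTheorem6 (R : realType) (d : measure_display) (T : measurableType d)
  (P : probability T R) (k : nat) (Y : set 'rV[R]_k)
  (g : 'rV[R]_k -> T -> R) (mu : 'rV[R]_k -> R) (K : 'rV[R]_k -> 'rV[R]_k -> R)
  (r : T -> nat) (y1 y2 ys1 ys2 : 'rV[R]_k) :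
  compact Y ->
  gaussian_process P g mu K ->
  continuous mu ->
  continuous (fun p : 'rV[R]_k * 'rV[R]_k => K p.1 p.2) ->
  noiseless_response g y1 y2 r ->
  (* y_1^* *)
  ys1 \in Y ->
  ((0 < P [set w | r w = 1%N])%E ->
     forall y, y \in Y ->
       Econd P (g y) [set w | r w = 1%N] <= Econd P (g ys1) [set w | r w = 1%N]) ->
  (* y_2^* *)
  ys2 \in Y ->
  ((0 < P [set w | r w = 2%N])%E ->
     forall y, y \in Y ->
       Econd P (g y) [set w | r w = 2%N] <= Econd P (g ys2) [set w | r w = 2%N]) ->
  EUBO P g ys1 ys2 >= W0 P Y g r.
Proof.
move=> _ [mg [psd gl]] _ _ [r12 [_ [_ mr]]] ys1Y h1 ys2Y h2.
have gint y : P.-integrable setT (EFin \o g y).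
  have hl := gl [:: (1, y)].
  have e : (fun w => \sum_(p <- [:: (1, y)]) p.1 * g p.2 w) = g y.
    by apply/funext => w; rewrite big_seq1 mul1r.
  rewrite e in hl.
  exact: (@normal_law_integrable R d T P (g y) _ _ (mg y) (psd [:: (1, y)]) hl).
set M := fun w => Num.max (g ys1 w) (g ys2 w).
have mM : measurable_fun setT M.
  by apply: measurable_maxr; apply: mg.
have Mint : P.-integrable setT (EFin \o M).
  have i3 := integrableD measurableT (integrable_abse (gint ys1)) (integrable_abse (gint ys2)).
  apply: (le_integrable measurableT _ _ i3); first exact/measurable_EFinP.
  move=> w _ /=; rewrite lee_fin.
  rewrite [X in _ <= X]ger0_norm ?addr_ge0 //.
  rewrite /M; case: (leP (g ys1 w) (g ys2 w)) => _.
    by rewrite lerDr.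
  by rewrite lerDl.
have key : forall (A : set T) (ys : 'rV_k), measurable A -> ys \in Y ->
    (forall w, g ys w <= M w) ->
    ((0 < P A)%E -> forall y, y \in Y -> Econd P (g y) A <= Econd P (g ys) A) ->
    (if (0 < P A)%E then fine (P A) * sup [set Econd P (g y) A | y in Y] else 0)
      <= fine (\int[P]_(w in A) (M w)%:E)%E.
  move=> A ys mA ysY gM hmax.
  have iA y : P.-integrable A (EFin \o g y).
    exact: (integrableS measurableT mA (@subsetT _ A) (gint y)).
  have MA : P.-integrable A (EFin \o M).
    exact: (integrableS measurableT mA (@subsetT _ A) Mint).
  case: ifPn => hp.
    have hs : sup [set Econd P (g y) A | y in Y] = Econd P (g ys) A.
      apply/le_anti/andP; split.
        apply: ge_sup; first by exists (Econd P (g ys) A), ys => //; rewrite -inE.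
        by move=> z [y Yy <-]; by apply: hmax => //; rewrite inE.
      apply: sup_upper_bound; last by exists ys => //; rewrite -inE.
      split; first by exists (Econd P (g ys) A), ys => //; rewrite -inE.
      exists (Econd P (g ys) A) => z [y Yy <-]; by apply: hmax => //; rewrite inE.
    rewrite hs /Econd.
    have pf : 0 < fine (P A).
      apply: fine_gt0; rewrite hp /=.
      exact: (le_lt_trans (probability_le1 P mA) (ltry 1)).
    rewrite mulrC divfK ?gt_eqF //.
    apply: fine_le.
    - exact: (integrable_fin_num mA (iA ys)).
    - exact: (integrable_fin_num mA MA).
    - by apply: (le_integral mA (iA ys) MA) => w _ /=; rewrite lee_fin.
  have PA0 : P A = 0%E.
    by apply/eqP; rewrite eq_le measure_ge0 andbT leNgt.
  rewrite null_set_integral //=.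
  exact/measurable_EFinP/measurable_funTS.
have g1M w : g ys1 w <= M w by rewrite /M le_max lexx.
have g2M w : g ys2 w <= M w by rewrite /M le_max lexx orbT.
have k1 := key _ _ (mr 1%N) ys1Y g1M h1.
have k2 := key _ _ (mr 2%N) ys2Y g2M h2.
have W0e : W0 P Y g r =
   (if (0 < P [set w | r w = 1%N])%E then fine (P [set w | r w = 1%N]) *
       sup [set Econd P (g y) [set w | r w = 1%N] | y in Y] else 0) +
   (if (0 < P [set w | r w = 2%N])%E then fine (P [set w | r w = 2%N]) *
       sup [set Econd P (g y) [set w | r w = 2%N] | y in Y] else 0).
  by rewrite /W0 !big_cons big_nil; case: ifP; case: ifP; rewrite ?addr0 ?add0r.
rewrite W0e; apply: (le_trans (lerD k1 k2)).
have U : [set: T] = [set w | r w = 1%N] `|` [set w | r w = 2%N].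
  apply/seteqP; split=> w /=.
    by move=> _; case: (r12 w) => h; [left|right].
  by [].

rewrite /EUBO /Expect -/M.
have -> : (\int[P]_w (M w)%:E = \int[P]_(w in [set w | r w = 1%N] `|` [set w | r w = 2%N]) (M w)%:E)%E.
  by rewrite -U.
rewrite integral_setU //; last first.
  - apply/disj_setPS => w [/= ->] //.
  - rewrite -U; exact/measurable_EFinP.
have f1 := integrable_fin_num (mr 1%N) (integrableS measurableT (mr 1%N) (@subsetT _ _) Mint).
have f2 := integrable_fin_num (mr 2%N) (integrableS measurableT (mr 2%N) (@subsetT _ _) Mint).
by rewrite (fineD f1 f2).
Qed.
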